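(* In the principal–agent contract design model described in the context, the principal's utility function $u^p:\mathcal{F}\to\mathbb{R}$ can be written as $u^p=g+h$, where $g$ is a concave function on $\mathcal{F}$ and $h$ is a piecewise constant function on $\mathcal{F}$.
   Context: There are $n$ agent actions $a_1,\dots,a_n$ with costs $c(a_i)\in\mathbb{R}$, and $m$ outcomes $o\in\{1,\dots,m\}$ with principal values $v_o\in\mathbb{R}$. Taking action $a_i$ induces a probability distribution $p(\cdot\mid a_i)$ over outcomes. A contract is a vector ${\bm f}\in\mathcal{F}=\mathbb{R}^m_{\ge 0}$, where $f_o$ is the payment to the agent on outcome $o$. Given ${\bm f}$, the agent takes an action $a^*({\bm f})$ maximizing $\mathbb{E}_{o\sim p(\cdot\mid a)}[f_o]-c(a)$ (ties broken in favor of the principal); the agent's utility is $u^a({\bm f})=\max_i\big(\mathbb{E}_{o\sim p(\cdot\mid a_i)}[f_o]-c(a_i)\big)$ and the principal's utility is $u^p({\bm f})=\mathbb{E}_{o\sim p(\cdot\mid a^*({\bm f}))}[v_o-f_o]$. A function is piecewise constant if $\mathcal{F}$ can be partitioned into finitely many pieces on each of which it is constant. *)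

(* Defs.v *)
From mathcomp Require Import all_boot all_order all_algebra.
Set Implicit Arguments. Unset Strict Implicit. Unset Printing Implicit Defensive.
Import Order.TTheory GRing.Theory Num.Theory.
Local Open Scope ring_scope.

(* Principal–agent model: actions are indexed by 'I_n.+1 (at least one action),
   outcomes by 'I_m.  c : action costs, v : principal values,
   p i o = probability of outcome o under action i. *)

Section Model.
Variables (R : realFieldType) (n m : nat).
Variables (c : 'I_n.+1 -> R) (v : 'I_m -> R) (p : 'I_n.+1 -> 'I_m -> R).

Definition is_distribution : Prop :=
  forall i, (forall o, 0 <= p i o) /\ \sum_(o < m) p i o = 1.

Definition contract_space (f : 'I_m -> R) : Prop := forall o, 0 <= f o.

Definition agent_util_of (f : 'I_m -> R) (i : 'I_n.+1) : R :=
  \sum_(o < m) p i o * f o - c i.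

Definition princ_util_of (f : 'I_m -> R) (i : 'I_n.+1) : R :=
  \sum_(o < m) p i o * (v o - f o).

Definition agent_best0 (f : 'I_m -> R) : 'I_n.+1 :=
  Order.arg_max ord0 predT (agent_util_of f).

Definition agent_util (f : 'I_m -> R) : R := agent_util_of f (agent_best0 f).

Definition best_response (f : 'I_m -> R) : 'I_n.+1 :=
  Order.arg_max (agent_best0 f)
    (fun i => agent_util_of f i == agent_util f) (princ_util_of f).

Definition princ_util (f : 'I_m -> R) : R := princ_util_of f (best_response f).

End Model.

Definition concave_on_contracts (R : realFieldType) (m : nat)
  (g : ('I_m -> R) -> R) : Prop :=
  forall (f1 f2 : 'I_m -> R) (t : R),
    contract_space f1 -> contract_space f2 -> 0 <= t -> t <= 1 ->
    t * g f1 + (1 - t) * g f2 <= g (fun o => t * f1 o + (1 - t) * f2 o).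

(* h is piecewise constant on F: F can be partitioned into finitely many
   pieces (the fibres of piece : F -> 'I_k) on each of which h is constant *)
Definition piecewise_constant_on_contracts (R : realFieldType) (m : nat)
  (h : ('I_m -> R) -> R) : Prop :=
  exists (k : nat) (piece : ('I_m -> R) -> 'I_k),
    forall f1 f2 : 'I_m -> R, contract_space f1 -> contract_space f2 ->
      piece f1 = piece f2 -> h f1 = h f2.

(* Main.v *)
Require Import Defs.
From mathcomp Require Import all_boot all_order all_algebra.
From mathcomp Require Import ring.
Import Order.TTheory GRing.Theory Num.Theory.
Local Open Scope ring_scope.

Section H.
Variables (R : realFieldType) (n m : nat).
Variables (c : 'I_n.+1 -> R) (v : 'I_m -> R) (p : 'I_n.+1 -> 'I_m -> R).

Lemma agent_util_ge f i : agent_util_of c p f i <= agent_util c p f.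
Proof.
rewrite /agent_util /agent_best0.
by case: arg_maxP => // j _ Hj; apply: Hj.
Qed.

Lemma best_response_opt f :
  agent_util_of c p f (best_response c v p f) = agent_util c p f.
Proof.
rewrite /best_response.
by case: arg_maxP => //= j /eqP.
Qed.

Lemma agent_util_convex f1 f2 t : 0 <= t -> t <= 1 ->
  agent_util c p (fun o => t * f1 o + (1 - t) * f2 o) <=
  t * agent_util c p f1 + (1 - t) * agent_util c p f2.
Proof.
move=> t0 t1.
set i := agent_best0 c p (fun o => t * f1 o + (1 - t) * f2 o).
have -> : agent_util c p (fun o => t * f1 o + (1 - t) * f2 o) =
  t * agent_util_of c p f1 i + (1 - t) * agent_util_of c p f2 i.
  rewrite /agent_util -/i /agent_util_of.
  rewrite !mulrBr.
  have -> : \sum_(o < m) p i o * (t * f1 o + (1 - t) * f2 o) =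
    t * \sum_(o < m) p i o * f1 o + (1 - t) * \sum_(o < m) p i o * f2 o.
    rewrite !mulr_sumr -big_split /=; apply: eq_bigr => o _; ring.
  ring.
have h1 := agent_util_ge f1 i; have h2 := agent_util_ge f2 i.
apply: lerD; [exact: ler_wpM2l | apply: ler_wpM2l => //; rewrite subr_ge0]; done.
Qed.

End H.

Theorem lemma4 (R : realFieldType) (n m : nat)
  (c : 'I_n.+1 -> R) (v : 'I_m -> R) (p : 'I_n.+1 -> 'I_m -> R) :
  is_distribution p ->
  exists (g h : ('I_m -> R) -> R),
    concave_on_contracts g /\ piecewise_constant_on_contracts h /\
    forall f : 'I_m -> R, contract_space f ->
      princ_util c v p f = g f + h f.
Proof.
move=> _.
exists (fun f => - agent_util c p f).
exists (fun f => let i := best_response c v p f in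
                 \sum_(o < m) p i o * v o - c i).
split; [|split].
- move=> f1 f2 t _ _ t0 t1.
  have := agent_util_convex _ _ _ c p f1 f2 t t0 t1.
  by move=> H; rewrite !mulrN -opprD lerN2.
- exists n.+1, (best_response c v p) => f1 f2 _ _ /= ->.
  done.
- move=> f _ /=.
  rewrite -(best_response_opt _ _ _ c v p f) /princ_util /princ_util_of /agent_util_of.
  set i := best_response c v p f.
  have -> : \sum_(o < m) p i o * (v o - f o) =
    \sum_(o < m) p i o * v o - \sum_(o < m) p i o * f o.
    by rewrite -sumrB; apply: eq_bigr => o _; rewrite mulrBr.
  ring.
Qed.
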